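(* Let $\Bbbk$ be an algebraically closed field of characteristic $2$ and let $\mathfrak{u}(\mathfrak{m})$ be the algebra generated by $a,b,c$ with relations $ab+ba=c$, $ac+ca=a$, $bc+cb=b$, $a^4=b^4=0$, $c^2+c=0$. Then, up to isomorphism, the simple finite-dimensional left $\mathfrak{u}(\mathfrak{m})$-modules are exactly $V_0$ and $V_1$.
   Context: $V_0$ is the one-dimensional module on which $a,b,c$ act by $0$. $V_1$ is the three-dimensional module with basis $v_1,v_2,v_3$ and action $av_1=v_2$, $av_2=v_3$, $av_3=0$; $bv_1=0$, $bv_2=v_1$, $bv_3=v_2$; $cv_1=v_1$, $cv_2=0$, $cv_3=v_3$ (this is the adjoint representation on the $3$-dimensional Lie algebra with basis $b,c,a$). *)

(* Defs.v *)
From HB Require Import structures.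
From mathcomp Require Import all_boot all_order all_algebra.
Set Implicit Arguments. Unset Strict Implicit. Unset Printing Implicit Defensive.
Import GRing.Theory.
Local Open Scope ring_scope.

(* Finite-dimensional left u(m)-modules = k^n (row vectors) with generators
   a,b,c acting by matrices A,B,C: x . v := v *m rho(x).  (With row vectors
   this is an anti-homomorphism on products, but every defining relation is
   invariant under reversing products, so this is exactly the same data.) *)
Section UM.
Variable k : fieldType.

Definition um_rep n (A B C : 'M[k]_n) : Prop :=
  [/\ A *m B + B *m A = C,
      A *m C + C *m A = A,
      B *m C + C *m B = B
    & [/\ A *m A *m A *m A = 0,
           B *m B *m B *m B = 0
         & C *m C + C = 0]].

Definition um_simple n (A B C : 'M[k]_n) : Prop :=
  (0 < n)%N /\
  forall U : 'M[k]_n,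
    (U *m A <= U)%MS -> (U *m B <= U)%MS -> (U *m C <= U)%MS ->
    U = 0 \/ row_full U.

Definition um_iso n m (A B C : 'M[k]_n) (A' B' C' : 'M[k]_m) : Prop :=
  exists P : 'M[k]_(n, m),
    [/\ row_free P, row_full P,
        A *m P = P *m A', B *m P = P *m B' & C *m P = P *m C'].

Definition V0 : 'M[k]_1 := 0.

(* V_1 : basis v1,v2,v3 = rows 0,1,2.
   a v1 = v2, a v2 = v3, a v3 = 0;  b v1 = 0, b v2 = v1, b v3 = v2;
   c v1 = v1, c v2 = 0, c v3 = v3. *)
Definition V1a : 'M[k]_3 :=
  \matrix_(i < 3, j < 3) (if (j == i.+1 :> nat) then 1 else 0).
Definition V1b : 'M[k]_3 :=
  \matrix_(i < 3, j < 3) (if (i == j.+1 :> nat) then 1 else 0).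
Definition V1c : 'M[k]_3 :=
  \matrix_(i < 3, j < 3) (if (i == j) && (i != 1 :> nat) then 1 else 0).
End UM.

(* Main.v *)
Require Import Defs.
From HB Require Import structures.
From mathcomp Require Import all_boot all_order all_algebra.
Set Implicit Arguments. Unset Strict Implicit. Unset Printing Implicit Defensive.
Import GRing.Theory.
Local Open Scope ring_scope.
Lemma two0 (k : fieldType) (h2 : 2%N \in [pchar k]) (x : k) : x + x = 0.
Proof. by rewrite -mulr2n -mulr_natr (pcharf0 h2) mulr0. Qed.

Lemma addXX (k : fieldType) (h2 : 2%N \in [pchar k]) m n (X : 'M[k]_(m,n)) : X + X = 0.
Proof. by apply/matrixP=> i j; rewrite !mxE two0. Qed.

Lemma full_ann (k : fieldType) m n p (v : 'M[k]_(m,n)) (X : 'M[k]_(n,p)) :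
  row_full v -> v *m X = 0 -> X = 0.
Proof.
move=> /row_fullP [Bi hB] h.
by rewrite -(mul1mx X) -hB -mulmxA h mulmx0.
Qed.

Lemma one_dim (k : fieldType) n (A B C : 'M[k]_n) (v : 'rV[k]_n) :
  um_simple A B C -> v != 0 -> v *m A = 0 -> v *m B = 0 -> v *m C = 0 ->
  row_full v.
Proof.
move=> [_ hs] nz vA vB vC.
have st : forall X : 'M[k]_n, v *m X = 0 -> (<<v>>%MS *m X <= <<v>>)%MS.
  by move=> X h; rewrite (eqmxMr X (genmxE v)) genmxE h sub0mx.
case: (hs _ (st _ vA) (st _ vB) (st _ vC)) => [h0|]; last by rewrite /row_full genmxE.
have : (v <= <<v>>)%MS by rewrite genmxE.
by rewrite h0 submx0 (negbTE nz).
Qed.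

Lemma iso_V0 (k : fieldType) n (A B C : 'M[k]_n) (v : 'rV[k]_n) :
  um_simple A B C -> v != 0 -> v *m A = 0 -> v *m B = 0 -> v *m C = 0 ->
  um_iso A B C (V0 k) (V0 k) (V0 k).
Proof.
move=> hs nz vA vB vC.
have rf := one_dim hs nz vA vB vC.
have -> := full_ann rf vA. have -> := full_ann rf vB. have -> := full_ann rf vC.
exists v^T; rewrite /V0 !mul0mx !mulmx0; split=> //.
  by rewrite /row_free mxrank_tr.
rewrite /row_full mxrank_tr eqn_leq rank_leq_row lt0n mxrank_eq0 //.
Qed.
Definition Q3 (k : fieldType) n (x y z : 'rV[k]_n) : 'M[k]_(3, n) :=
  \matrix_(i < 3) [:: x; y; z]`_i.

Lemma mulQ3 (k : fieldType) n (x y z : 'rV[k]_n) (u : 'rV[k]_3) :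
  u *m Q3 x y z = u 0 0 *: x + u 0 1 *: y + u 0 2 *: z.
Proof.
rewrite mulmx_sum_row !big_ord_recr big_ord0 /= !rowK add0r.
by congr (_ *: _ + _ *: _ + _ *: _); try (congr (u 0 _); apply: val_inj).
Qed.

Lemma iso_of_Q (k : fieldType) n (A B C : 'M[k]_n) (Q : 'M[k]_(3, n)) :
  row_free Q -> row_full Q -> Q *m A = V1a k *m Q -> Q *m B = V1b k *m Q ->
  Q *m C = V1c k *m Q -> um_iso A B C (V1a k) (V1b k) (V1c k).
Proof.
move=> rf rF hA hB hC.
set P := pinvmx Q.
have QP : Q *m P = 1%:M by exact: mulmxVp.
have PQ : P *m Q = 1%:M by exact: mulVpmx.
have tr : forall X Y, Q *m X = Y *m Q -> X *m P = P *m Y.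
  move=> X Y h.
  by rewrite -[X *m P]mul1mx -PQ -!mulmxA (mulmxA Q) h -!mulmxA QP mulmx1.
exists P; split; try exact: tr.
  rewrite /row_free eqn_leq rank_leq_row /=.
  by rewrite -{1}(mxrank1 k n) -PQ mxrankM_maxl.
rewrite /row_full eqn_leq rank_leq_col /=.
by rewrite -{1}(mxrank1 k 3) -QP mxrankM_maxr.
Qed.

Lemma key (k : fieldType) (h2 : 2%N \in [pchar k]) n (A B C : 'M[k]_n)
  (w : 'rV[k]_n) : um_rep A B C -> um_simple A B C ->
  w != 0 -> w *m A = 0 -> w *m C = w -> um_iso A B C (V1a k) (V1b k) (V1c k).
Proof.
case=> hAB hAC hBC [hA4 hB4 hCC] hs wnz wA wC.
have t := addXX h2.
have BA : B *m A = A *m B + C by rewrite -[B *m A]add0r -(t _ _ (A *m B)) -addrA hAB.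
have BC : B *m C = B + C *m B by rewrite -[B *m C]addr0 -(t _ _ (C *m B)) addrA hBC.
pose w1 := w *m B. pose w2 := w1 *m B. pose w3 := w2 *m B.
have w1C : w1 *m C = 0 by rewrite /w1 -mulmxA BC mulmxDr mulmxA wC t.
have w1A : w1 *m A = w by rewrite /w1 -mulmxA BA mulmxDr mulmxA wA mul0mx add0r wC.
have w2C : w2 *m C = w2 by rewrite /w2 -mulmxA BC mulmxDr mulmxA w1C mul0mx addr0.
have w2A : w2 *m A = w1 by rewrite /w2 -mulmxA BA mulmxDr mulmxA w1A w1C addr0.
have w3C : w3 *m C = 0 by rewrite /w3 -mulmxA BC mulmxDr mulmxA w2C t.
have w3A : w3 *m A = 0 by rewrite /w3 -mulmxA BA mulmxDr mulmxA w2A w2C t.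
have w3B : w3 *m B = 0.
  have : w *m (B *m B *m B *m B) = 0 by rewrite hB4 mulmx0.
  by rewrite !mulmxA.
have w30 : w3 = 0.
  case: (eqVneq w3 0) => // w3nz.
  have rf := one_dim hs w3nz w3A w3B w3C.
  have C0 := full_ann rf w3C.
  by move: wnz; rewrite -wC C0 mulmx0 eqxx.
pose U := (w2 + w1 + w)%MS.
have s2 : (w2 <= U)%MS by rewrite /U -addsmxA addsmxSl.
have s1 : (w1 <= U)%MS by rewrite /U (submx_trans (addsmxSr w2 w1)) // addsmxSl.
have s0 : (w <= U)%MS by rewrite /U addsmxSr.
have stA : (U *m A <= U)%MS.
  by rewrite addsmxMr addsmx_sub addsmxMr addsmx_sub w2A w1A wA s1 s0 sub0mx.
have stB : (U *m B <= U)%MS.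
  by rewrite addsmxMr addsmx_sub addsmxMr addsmx_sub -/w2 -/w3 w30 -/w1 s1 s2 sub0mx.
have stC : (U *m C <= U)%MS by rewrite addsmxMr addsmx_sub addsmxMr addsmx_sub w2C w1C wC s2 s0 sub0mx.
have rU : row_full U.
  case: (hs.2 U stA stB stC) => // U0.
  by move: s0; rewrite U0 submx0 (negbTE wnz).
pose Q := Q3 w2 w1 w.
apply: (@iso_of_Q _ _ _ _ _ Q).
- rewrite -kermx_eq0 -submx0; apply/row_subP => i.
  set u := row i (kermx Q).
  have uQ : u *m Q = 0 by apply/sub_kermxP; exact: row_sub.
  rewrite mulQ3 in uQ.
  have uQA := congr1 (mulmx^~ A) uQ.
  rewrite /= !mulmxDl -!scalemxAl w2A w1A wA scaler0 addr0 mul0mx in uQA.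
  have uQAA := congr1 (mulmx^~ A) uQA.
  rewrite /= !mulmxDl -!scalemxAl w1A wA scaler0 addr0 mul0mx in uQAA.
  have u0 : u 0 0 = 0 by move/eqP: uQAA; rewrite scalemx_eq0 (negbTE wnz) orbF => /eqP.
  rewrite u0 scale0r add0r in uQA.
  have u1 : u 0 1 = 0 by move/eqP: uQA; rewrite scalemx_eq0 (negbTE wnz) orbF => /eqP.
  rewrite u0 u1 !scale0r !add0r in uQ.
  have u2 : u 0 2 = 0 by move/eqP: uQ; rewrite scalemx_eq0 (negbTE wnz) orbF => /eqP.
  rewrite submx0; apply/eqP/rowP => j; rewrite [RHS]mxE.
  case: j => [[|[|[|j]]] hj] //.
  + by rewrite (_ : Ordinal hj = 0) ?u0 //; apply: val_inj.
  + by rewrite (_ : Ordinal hj = 1) ?u1 //; apply: val_inj.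
  + by rewrite (_ : Ordinal hj = 2) ?u2 //; apply: val_inj.
- rewrite -sub1mx; apply: submx_trans (_ : (1%:M <= U)%MS) _; first by rewrite sub1mx.
  rewrite /U.
  have -> : w2 = row 0 Q by rewrite rowK.
  have -> : w1 = row 1 Q by rewrite rowK.
  have -> : w = row 2 Q by rewrite rowK.
  by rewrite !addsmx_sub !row_sub.
all: apply/row_matrixP => i; rewrite !row_mul rowK mulQ3.
all: case: i => [[|[|[|i]]] hi] //=; rewrite !mxE /= ?scale0r ?scale1r ?add0r ?addr0.
all: rewrite ?w2A ?w1A ?wA ?w2C ?w1C ?wC //.
Qed.

Definition o0 : 'I_3 := @Ordinal 3 0 isT.
Definition o1 : 'I_3 := @Ordinal 3 1 isT.
Definition o2 : 'I_3 := @Ordinal 3 2 isT.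

Lemma sum3 (V : zmodType) (F : 'I_3 -> V) : \sum_(j < 3) F j = F o0 + F o1 + F o2.
Proof.
rewrite !big_ord_recr big_ord0 /= add0r.
by congr (F _ + F _ + F _); apply: val_inj.
Qed.

Lemma ord3 (P : 'I_3 -> Prop) : P o0 -> P o1 -> P o2 -> forall j, P j.
Proof.
move=> h0 h1 h2; case=> [[|[|[|j]]] hj].
- by rewrite (_ : Ordinal hj = o0) //; apply: val_inj.
- by rewrite (_ : Ordinal hj = o1) //; apply: val_inj.
- by rewrite (_ : Ordinal hj = o2) //; apply: val_inj.
- by [].
Qed.

Ltac simp3 := rewrite ?mul0r ?mulr0 ?mul1r ?mulr1 ?add0r ?addr0.

Lemma V1_simple (k : fieldType) : um_simple (V1a k) (V1b k) (V1c k).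
Proof.
split=> // U sA sB _.
case: (eqVneq U 0) => [->|nz]; [by left|right].
have [i ri] : exists i, row i U != 0.
  apply/existsP; apply: contraNT nz; rewrite negb_exists => /forallP h.
  by apply/eqP/row_matrixP => i; rewrite row0; apply/eqP; move: (h i); rewrite negbK.
set u := row i U.
have uU : (u <= U)%MS by exact: row_sub.
have stA : forall v : 'rV_3, (v <= U)%MS -> (v *m V1a k <= U)%MS.
  by move=> v h; apply: submx_trans (submxMr _ h) sA.
have stB : forall v : 'rV_3, (v <= U)%MS -> (v *m V1b k <= U)%MS.
  by move=> v h; apply: submx_trans (submxMr _ h) sB.
pose e (j : 'I_3) : 'rV[k]_3 := delta_mx 0 j.
have eqA2 : u *m V1a k *m V1a k = u 0 o0 *: e o2.
  by apply/rowP; apply: ord3; rewrite !(sum3, mxE) /=; simp3.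
have eqA1 : u 0 o0 = 0 -> u *m V1a k = u 0 o1 *: e o2.
  rewrite /u mxE => h0.
  by apply/rowP; apply: ord3; rewrite !(sum3, mxE) /=; simp3; rewrite ?h0.
have eqA0 : u 0 o0 = 0 -> u 0 o1 = 0 -> u = u 0 o2 *: e o2.
  rewrite /u !mxE => h0 h1.
  by apply/rowP; apply: ord3; rewrite !(sum3, mxE) /=; simp3; rewrite ?h0 ?h1.
have e2U : (e o2 <= U)%MS.
  have sc : forall (a : k) (v : 'rV_3), a != 0 -> (a *: v <= U)%MS -> (v <= U)%MS.
    by move=> a v a0 h; rewrite -(scale1r v) -(mulVf a0) -scalerA scalemx_sub.
  case: (eqVneq (u 0 o0) 0) => h0.
    case: (eqVneq (u 0 o1) 0) => h1.
      case: (eqVneq (u 0 o2) 0) => h2.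
        by move: ri; rewrite -/u (eqA0 h0 h1) h2 scale0r eqxx.
      by apply: (sc _ _ h2); rewrite -(eqA0 h0 h1).
    by apply: (sc _ _ h1); rewrite -(eqA1 h0); exact: (stA _ uU).
  by apply: (sc _ _ h0); rewrite -eqA2; exact: (stA _ (stA _ uU)).
have e1 : e o2 *m V1b k = e o1.
  by apply/rowP; apply: ord3; rewrite !(sum3, mxE) /=; simp3.
have e0 : e o1 *m V1b k = e o0.
  by apply/rowP; apply: ord3; rewrite !(sum3, mxE) /=; simp3.
have e1U : (e o1 <= U)%MS by rewrite -e1; exact: (stB _ e2U).
have e0U : (e o0 <= U)%MS by rewrite -e0; exact: (stB _ e1U).
by rewrite -sub1mx; apply/row_subP; apply: ord3; rewrite row1.
Qed.

Lemma V1_rep (k : fieldType) (h2 : 2%N \in [pchar k]) : um_rep (V1a k) (V1b k) (V1c k).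
Proof.
have t := two0 h2.
split; [| | | split];
  apply/matrixP => i j; rewrite !(big_ord_recr, big_ord0, mxE) /=;
  case: i => [[|[|[|i]]] Hi] //; case: j => [[|[|[|j]]] Hj] //=;
  rewrite ?mul0r ?mulr0 ?mul1r ?mulr1 ?add0r ?addr0 ?t //.
Qed.


Theorem proposition3p1 (k : closedFieldType) (hchar : 2%N \in [pchar k]) :
  [/\ um_rep (V0 k) (V0 k) (V0 k) /\ um_simple (V0 k) (V0 k) (V0 k),
      um_rep (V1a k) (V1b k) (V1c k) /\ um_simple (V1a k) (V1b k) (V1c k),
      ~ um_iso (V0 k) (V0 k) (V0 k) (V1a k) (V1b k) (V1c k)
    & forall (n : nat) (A B C : 'M[k]_n),
        um_rep A B C -> um_simple A B C ->
        um_iso A B C (V0 k) (V0 k) (V0 k) \/ um_iso A B C (V1a k) (V1b k) (V1c k)].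
Proof.
have t := addXX hchar.
split.
- split; first by split; rewrite /V0 ?mulmx0 ?addr0 //; split; rewrite ?mulmx0 ?addr0.
  split=> // U _ _ _; case: (eqVneq U 0) => [->|nz]; [by left|right].
  by rewrite /row_full eqn_leq rank_leq_col lt0n mxrank_eq0 nz.
- by split; [exact: V1_rep | exact: V1_simple].
- case=> P [rf rF _ _ _]; move: rf rF; rewrite /row_free /row_full => /eqP r1 /eqP r3.
  by rewrite r1 in r3.
- move=> n A B C hr hs.
  have [hAB hAC hBC [hA4 hB4 hCC]] := hr.
  have [u nzu uA] : exists2 v : 'rV_n, v != 0 & v *m A = 0.
    have n0 := hs.1.
    pose u : 'rV[k]_n := delta_mx 0 (Ordinal n0).
    have unz : u != 0.
      apply/eqP => /matrixP /(_ 0 (Ordinal n0)); rewrite !mxE !eqxx /= => /eqP.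
      by rewrite oner_eq0.
    case: (eqVneq (u *m A) 0) => [h|h1]; first by exists u.
    case: (eqVneq (u *m A *m A) 0) => [h|h2]; first by exists (u *m A).
    case: (eqVneq (u *m A *m A *m A) 0) => [h|h3]; first by exists (u *m A *m A).
    exists (u *m A *m A *m A) => //.
    have : u *m (A *m A *m A *m A) = 0 by rewrite hA4 mulmx0.
    by rewrite !mulmxA.
  have CA : C *m A = A *m C + A by rewrite -[C *m A]add0r -(t _ _ (A *m C)) -addrA hAC.
  have CC : C *m C = C by rewrite -[C *m C]addr0 -(t _ _ C) addrA hCC add0r.
  have BA : B *m A = A *m B + C by rewrite -[B *m A]add0r -(t _ _ (A *m B)) -addrA hAB.
  have BC : B *m C = B + C *m B by rewrite -[B *m C]addr0 -(t _ _ (C *m B)) addrA hBC.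
  case: (eqVneq (u *m C) 0) => uC.
  + pose v := u *m B.
    have vA : v *m A = 0 by rewrite /v -mulmxA BA mulmxDr mulmxA uA mul0mx add0r uC.
    have vC : v *m C = v by rewrite /v -mulmxA BC mulmxDr mulmxA uC mul0mx addr0.
    case: (eqVneq v 0) => v0.
      by left; exact: (iso_V0 hs nzu uA v0 uC).
    by right; exact: (key hchar hr hs v0 vA vC).
  + right; apply: (key hchar hr hs uC).
      by rewrite -mulmxA CA mulmxDr mulmxA uA mul0mx add0r.
    by rewrite -mulmxA CC.
Qed.
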